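(* Let $f\colon \mathbb{R}^n \times \mathbb{R}^p \to \overline{\mathbb{R}}$ be a proper nearly convex function, let $m(x)=\inf\{f(x,y)\mid y\in\mathbb{R}^p\}$, and suppose $m$ is finite at $\bar x \in \mathbb{R}^n$. For $\eta>0$ let $S_\eta(\bar x)=\{y\in\mathbb{R}^p\mid f(\bar x,y)\le m(\bar x)+\eta\}$, and let $S(\bar x)=\{y\in\mathbb{R}^p\mid m(\bar x)=f(\bar x,y)\}$. Then for every $\varepsilon \ge 0$, $$\partial_\varepsilon m(\bar x) = \bigcap_{\eta >0}\ \bigcap_{y \in S_\eta (\bar x)} \big\{\xi \in \mathbb{R}^n \mid (\xi,0) \in \partial_{\varepsilon +\eta} f (\bar x, y) \big\} =\bigcap_{\eta >0}\ \bigcup_{y \in \mathbb{R}^p} \big\{\xi \in \mathbb{R}^n \mid (\xi,0) \in \partial_{\varepsilon +\eta} f (\bar x, y) \big\}.$$ In particular, $$\partial m(\bar x) = \bigcap_{\eta >0}\ \bigcap_{y \in S_\eta (\bar x)} \big\{\xi \in \mathbb{R}^n \mid (\xi,0) \in \partial_{\eta} f (\bar x, y) \big\} =\bigcap_{\eta >0}\ \bigcup_{y \in \mathbb{R}^p} \big\{\xi \in \mathbb{R}^n \mid (\xi,0) \in \partial_{\eta} f (\bar x, y) \big\}.$$ In addition, if $S(\bar x)\neq \emptyset$, then for every $\varepsilon \ge 0$ and all $y \in S(\bar x)$, $$\partial_\varepsilon m(\bar x) = \big\{\xi \in \mathbb{R}^n \mid (\xi,0) \in \partial_{\varepsilon}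 f (\bar x, y) \big\}.$$
   Context: $\overline{\mathbb{R}}=[-\infty,\infty]$; proper means nonempty domain and never $-\infty$. A set $D$ is nearly convex if there is a convex $E$ with $E\subset D\subset\overline{E}$; a function is nearly convex if its epigraph is nearly convex. For a function $\psi$ on $\mathbb{R}^k$, $\varepsilon\ge0$ and $\bar z$ with $\psi(\bar z)$ finite, $\partial_\varepsilon\psi(\bar z)=\{\zeta\in\mathbb{R}^k\mid\langle\zeta,z-\bar z\rangle-\varepsilon\le\psi(z)-\psi(\bar z)\ \forall z\in\mathbb{R}^k\}$, and $\partial\psi=\partial_0\psi$. *)

(* Defs.v *)
From HB Require Import structures.
From mathcomp Require Import all_boot all_order all_algebra.
From mathcomp Require Import all_classical all_reals all_analysis.
Set Implicit Arguments. Unset Strict Implicit. Unset Printing Implicit Defensive.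
Import Order.TTheory GRing.Theory Num.Theory.
Import numFieldNormedType.Exports.
Local Open Scope classical_set_scope.
Local Open Scope ring_scope.

Section Defs.
Variable R : realType.

Definition dotv (k : nat) (u v : 'rV[R]_k) : R :=
  \sum_(i < k) u ord0 i * v ord0 i.

Definition dotp (n p : nat) (u v : 'rV[R]_n * 'rV[R]_p) : R :=
  dotv u.1 v.1 + dotv u.2 v.2.

Definition proper_fun (T : Type) (f : T -> \bar R) : Prop :=
  (exists z, (f z < +oo)%E) /\ (forall z, f z != -oo%E).

Definition nearly_convex_set (V : lmodType R) (D : set V)
  (cl : set V -> set V) : Prop :=
  exists E : set V, convex_set (E : set (convex_lmodType V)) /\ E `<=` D /\ D `<=` cl E.

Definition epigraph (n p : nat) (f : 'rV[R]_n * 'rV[R]_p -> \bar R) :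
  set ('rV[R]_n * 'rV[R]_p * R) :=
  [set zr | (f zr.1 <= zr.2%:E)%E].

(** Nearly convex function: its epigraph is nearly convex (closure taken in
    the product topology of (R^n x R^p) x R, i.e. the Euclidean one). *)
Definition nearly_convex_fun (n p : nat) (f : 'rV[R]_n * 'rV[R]_p -> \bar R) : Prop :=
  nearly_convex_set (epigraph f) (@closure ('rV[R]_n * 'rV[R]_p * R)%type).

(** epsilon-subdifferential of psi at z0, w.r.t. the inner product ip.
    It is empty unless psi z0 is finite. *)
Definition eps_subdiff (T : zmodType) (ip : T -> T -> R) (psi : T -> \bar R)
  (eps : R) (z0 : T) : set T :=
  [set zeta | psi z0 \is a fin_num /\
     forall z, ((ip zeta (z - z0) - eps)%:E <= psi z - psi z0)%E].

Definition marginal (n p : nat) (f : 'rV[R]_n * 'rV[R]_p -> \bar R)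
  (x : 'rV[R]_n) : \bar R :=
  ereal_inf [set f (x, y) | y in [set: 'rV[R]_p]].

End Defs.

(* Main.v *)
Require Import Defs.
From HB Require Import structures.
From mathcomp Require Import all_boot all_order all_algebra.
From mathcomp Require Import all_classical all_reals all_analysis.
From mathcomp Require Import lra.
Import Order.TTheory GRing.Theory Num.Theory.
Import numFieldNormedType.Exports.
Local Open Scope classical_set_scope.
Local Open Scope ring_scope.

Lemma le_subE (R : realType) (a : \bar R) (c r : R) :
  (c%:E <= a - r%:E)%E <-> ((c + r)%:E <= a)%E.
Proof.
case: a => [t| |] /=.
- rewrite !lee_fin; split => H; lra.
- by split => _; rewrite leey.
- by split; rewrite /= leeNy_eq.
Qed.

Lemma dotp0 (R : realType) (n p : nat) (xi x xb : 'rV[R]_n) (y' y : 'rV[R]_p) :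
  dotp (xi, 0) ((x, y') - (xb, y)) = dotv xi (x - xb).
Proof.
rewrite /dotp /= [dotv 0 _]/dotv big1 ?addr0 // => i _.
by rewrite mxE mul0r.
Qed.

Lemma subdiffmE (R : realType) (n p : nat) (f : 'rV[R]_n * 'rV[R]_p -> \bar R)
  (xb xi : 'rV[R]_n) (r e : R) : marginal f xb = r%:E ->
  eps_subdiff (@dotv R n) (marginal f) e xb xi <->
  (forall x y', ((dotv xi (x - xb) - e + r)%:E <= f (x, y'))%E).
Proof.
move=> hr; rewrite /eps_subdiff /= hr; split.
- case=> _ H x y'; have := H x; rewrite le_subE => /le_trans; apply.
  by apply: ereal_inf_lbound; exists y'.
- move=> H; split => // x; rewrite le_subE.
  by apply/ereal_infP => _ [y' _ <-]; apply: H.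
Qed.

Lemma subdifffE (R : realType) (n p : nat) (f : 'rV[R]_n * 'rV[R]_p -> \bar R)
  (xb xi : 'rV[R]_n) (y : 'rV[R]_p) (s e : R) : f (xb, y) = s%:E ->
  eps_subdiff (@dotp R n p) f e (xb, y) (xi, 0) <->
  (forall x y', ((dotv xi (x - xb) - e + s)%:E <= f (x, y'))%E).
Proof.
move=> hs; rewrite /eps_subdiff /= hs; split.
- by case=> _ H x y'; have := H (x, y'); rewrite dotp0 le_subE.
- move=> H; split => // -[x y']; rewrite dotp0 le_subE; exact: H.
Qed.

Lemma subdifffin (R : realType) (n p : nat) (f : 'rV[R]_n * 'rV[R]_p -> \bar R)
  (xb xi : 'rV[R]_n) (y : 'rV[R]_p) (e : R) :
  eps_subdiff (@dotp R n p) f e (xb, y) (xi, 0) -> exists s, f (xb, y) = s%:E.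
Proof. by case; case: (f (xb, y)) => // s _ _; exists s. Qed.

Arguments subdiffmE {R n p f xb xi r e}.
Arguments subdifffE {R n p f xb xi y s e}.
Arguments subdifffin {R n p f xb xi y e}.

Theorem mainTheorem10 (R : realType) (n p : nat)
  (f : 'rV[R]_n * 'rV[R]_p -> \bar R) (xb : 'rV[R]_n) :
  proper_fun f -> nearly_convex_fun f -> marginal f xb \is a fin_num ->
  let m := marginal f in
  let S_ := fun eta : R => [set y : 'rV[R]_p | (f (xb, y) <= m xb + eta%:E)%E] in
  let S := [set y : 'rV[R]_p | m xb = f (xb, y)] in
  (forall eps : R, 0 <= eps ->
     eps_subdiff (@dotv R n) m eps xb =
       \bigcap_(eta in [set e : R | 0 < e]) \bigcap_(y in S_ eta)
          [set xi | eps_subdiff (@dotp R n p) f (eps + eta) (xb, y) (xi, 0)]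
     /\
     eps_subdiff (@dotv R n) m eps xb =
       \bigcap_(eta in [set e : R | 0 < e]) \bigcup_(y in [set: 'rV[R]_p])
          [set xi | eps_subdiff (@dotp R n p) f (eps + eta) (xb, y) (xi, 0)])
  /\
  (eps_subdiff (@dotv R n) m 0 xb =
       \bigcap_(eta in [set e : R | 0 < e]) \bigcap_(y in S_ eta)
          [set xi | eps_subdiff (@dotp R n p) f eta (xb, y) (xi, 0)]
   /\
   eps_subdiff (@dotv R n) m 0 xb =
       \bigcap_(eta in [set e : R | 0 < e]) \bigcup_(y in [set: 'rV[R]_p])
          [set xi | eps_subdiff (@dotp R n p) f eta (xb, y) (xi, 0)])
  /\
  (S !=set0 ->
     forall eps : R, 0 <= eps -> forall y, S y ->
       eps_subdiff (@dotv R n) m eps xb =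
         [set xi | eps_subdiff (@dotp R n p) f eps (xb, y) (xi, 0)]).
Proof.
move=> _ _ hfin m S_ S.
have [r hr] : exists r, marginal f xb = r%:E.
  by move: hfin; case: (marginal f xb) => // r _; exists r.
have lbm : forall y, (r%:E <= f (xb, y))%E.
  by move=> y; rewrite -hr; apply: ereal_inf_lbound; exists y.
have key : forall (eps : R) (g : R -> R), (forall eta, g eta = eps + eta) ->
  eps_subdiff (@dotv R n) m eps xb =
       \bigcap_(eta in [set e : R | 0 < e]) \bigcap_(y in S_ eta)
          [set xi | eps_subdiff (@dotp R n p) f (g eta) (xb, y) (xi, 0)]
     /\
     eps_subdiff (@dotv R n) m eps xb =
       \bigcap_(eta in [set e : R | 0 < e]) \bigcup_(y in [set: 'rV[R]_p])
          [set xi | eps_subdiff (@dotp R n p) f (g eta) (xb, y) (xi, 0)].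
  move=> eps g hg.
  have h1 : eps_subdiff (@dotv R n) m eps xb `<=`
       \bigcap_(eta in [set e : R | 0 < e]) \bigcap_(y in S_ eta)
          [set xi | eps_subdiff (@dotp R n p) f (g eta) (xb, y) (xi, 0)].
    move=> xi /(subdiffmE hr) H eta eta0 y Sy.
    have [s hs] : exists s, f (xb, y) = s%:E.
      by move: (lbm y) Sy; rewrite /S_ /m hr /=; case: (f (xb, y)) => // s _ _; exists s.
    have sle : s <= r + eta.
      by move: Sy; rewrite /S_ /m hr /= hs -EFinD lee_fin.
    apply/(subdifffE hs) => x y'; apply: le_trans (H x y').
    rewrite lee_fin hg; lra.
  have h2 : \bigcap_(eta in [set e : R | 0 < e]) \bigcap_(y in S_ eta)
          [set xi | eps_subdiff (@dotp R n p) f (g eta) (xb, y) (xi, 0)] `<=`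
       \bigcap_(eta in [set e : R | 0 < e]) \bigcup_(y in [set: 'rV[R]_p])
          [set xi | eps_subdiff (@dotp R n p) f (g eta) (xb, y) (xi, 0)].
    move=> xi H eta eta0.
    have : (marginal f xb < marginal f xb + eta%:E)%E.
      by rewrite hr -EFinD lte_fin; have e0 : 0 < eta := eta0; lra.
    case/ereal_inf_lt => _ [y _ <-] hy.
    exists y => //; apply: (H eta eta0 y).
    by rewrite /S_ /m; apply/ltW.
  have h3 : \bigcap_(eta in [set e : R | 0 < e]) \bigcup_(y in [set: 'rV[R]_p])
          [set xi | eps_subdiff (@dotp R n p) f (g eta) (xb, y) (xi, 0)] `<=`
       eps_subdiff (@dotv R n) m eps xb.
    move=> xi H; apply/(subdiffmE hr) => x y'.
    have K : forall eta, 0 < eta ->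
        ((dotv xi (x - xb) - eps - eta + r)%:E <= f (x, y'))%E.
      move=> eta eta0; case: (H eta eta0) => y _ Hy.
      have [s hs] := subdifffin Hy.
      move/(subdifffE hs): Hy => /(_ x y'); apply: le_trans.
      have := lbm y; rewrite hs !lee_fin hg => rs; lra.
    move: K; case: (f (x, y')) => [t| |] K.
    - rewrite lee_fin leNgt; apply/negP => lt.
      have := K ((dotv xi (x - xb) - eps + r - t) / 2).
      rewrite lee_fin => K'; have : 0 < (dotv xi (x - xb) - eps + r - t) / 2 by lra.
      move/K'; lra.
    - by rewrite leey.
    - by have := K 1 ltr01; rewrite leeNy_eq.
  split; apply/seteqP; split => //.
  + by move=> xi /h2 /h3.
  + by move=> xi /h1 /h2.
split; first by move=> eps _; apply: key.
split; first by apply: key => eta; rewrite add0r.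
move=> _ eps _ y Sy.
have hs : f (xb, y) = r%:E by rewrite -Sy.
apply/seteqP; split => xi.
- by move/(subdiffmE hr) => H; apply/(subdifffE hs).
- by move/(subdifffE hs) => H; apply/(subdiffmE hr).
Qed.
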